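(* Let $V$ be a finite-dimensional $G$-module for an algebraic group $G$. (1) For every closed subgroup $H\subset G$ the fixed point set $V^H$ is $G$-symmetric. (2) For all $v\in V$ we have $M(v)=\operatorname{End}_G(V)(v)\subset V^{G_v}$.
   Context: $\Bbbk$ is algebraically closed of characteristic $0$. Vector fields on $V$ are polynomial maps $\xi\colon V\to V$; $\xi$ is $G$-invariant if $\xi(gv)=g\xi(v)$. A closed subvariety $X\subset V$ is $G$-symmetric if $\xi(x)\in T_xX$ for all $x\in X$ and all $G$-invariant vector fields $\xi$. $M(v)$ is the smallest closed $G$-symmetric subvariety containing $v$. $\operatorname{End}_G(V)$ is the set of $G$-equivariant polynomial maps $V\to V$ and $\operatorname{End}_G(V)(v)=\{\phi(v)\mid\phi\in\operatorname{End}_G(V)\}$. $G_v$ is the stabilizer of $v$. *)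

(* Defs.v *)
From HB Require Import structures.
From mathcomp Require Import all_boot all_order all_algebra.
From mathcomp Require Import mpoly.
Set Implicit Arguments. Unset Strict Implicit. Unset Printing Implicit Defensive.
Import GRing.Theory.
Local Open Scope ring_scope.

Section Defs.
Variables (k : closedFieldType) (n : nat).

(* V = k^n, written as column vectors; coordinates of a vector *)
Definition coords (x : 'cV[k]_n) : 'I_n -> k := fun j => x j 0.

Definition polymap (f : 'cV[k]_n -> 'cV[k]_n) : Prop :=
  exists p : 'I_n -> {mpoly k[n]}, forall x i, f x i 0 = (p i).@[coords x].

Definition zclosed (X : 'cV[k]_n -> Prop) : Prop :=
  exists S : {mpoly k[n]} -> Prop,
    forall x, X x <-> (forall p, S p -> p.@[coords x] = 0).

Definition vanishes_on (X : 'cV[k]_n -> Prop) (p : {mpoly k[n]}) : Prop :=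
  forall x, X x -> p.@[coords x] = 0.

Definition tangent (X : 'cV[k]_n -> Prop) (x w : 'cV[k]_n) : Prop :=
  forall p, vanishes_on X p ->
    \sum_(i < n) (mderiv i p).@[coords x] * w i 0 = 0.

(* Zariski-closed subsets of GL_n(k) = GL(V): we test polynomials in the
   n*n matrix entries (via mxvec) *)
Definition mx_coords (g : 'M[k]_n) : 'I_(n * n) -> k := fun j => mxvec g 0 j.

Definition closed_subgroup (G : 'M[k]_n -> Prop) : Prop :=
  [/\ forall g, G g -> g \in unitmx,
      G 1%:M,
      forall g h, G g -> G h -> G (g *m h),
      forall g, G g -> G (invmx g)
    & exists S : {mpoly k[n * n]} -> Prop,
        forall g, G g <-> (g \in unitmx /\ forall p, S p -> p.@[mx_coords g] = 0)].

Definition equivariant (G : 'M[k]_n -> Prop) (f : 'cV[k]_n -> 'cV[k]_n) : Prop :=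
  forall g x, G g -> f (g *m x) = g *m f x.

Definition inv_vfield (G : 'M[k]_n -> Prop) (xi : 'cV[k]_n -> 'cV[k]_n) : Prop :=
  polymap xi /\ equivariant G xi.

Definition G_symmetric (G : 'M[k]_n -> Prop) (X : 'cV[k]_n -> Prop) : Prop :=
  zclosed X /\
  forall xi, inv_vfield G xi -> forall x, X x -> tangent X x (xi x).

Definition is_M (G : 'M[k]_n -> Prop) (v : 'cV[k]_n) (X : 'cV[k]_n -> Prop) : Prop :=
  [/\ G_symmetric G X, X v &
      forall Y, G_symmetric G Y -> Y v -> forall x, X x -> Y x].

Definition EndG (G : 'M[k]_n -> Prop) (phi : 'cV[k]_n -> 'cV[k]_n) : Prop :=
  polymap phi /\ equivariant G phi.

Definition EndG_at (G : 'M[k]_n -> Prop) (v : 'cV[k]_n) : 'cV[k]_n -> Prop :=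
  fun w => exists phi, EndG G phi /\ w = phi v.

Definition fixed (H : 'M[k]_n -> Prop) : 'cV[k]_n -> Prop :=
  fun x => forall h, H h -> h *m x = x.

Definition stab (G : 'M[k]_n -> Prop) (v : 'cV[k]_n) : 'M[k]_n -> Prop :=
  fun g => G g /\ g *m v = v.

End Defs.

(* Main.v *)
Require Import Defs.
From HB Require Import structures.
From mathcomp Require Import all_boot all_order all_algebra.
From mathcomp Require Import mpoly.
From Stdlib Require Import Classical Lia.
From mathcomp Require Import zify.
Set Implicit Arguments. Unset Strict Implicit. Unset Printing Implicit Defensive.
Import GRing.Theory.
Local Open Scope ring_scope.

Section Aux.
Variables (k : closedFieldType) (n : nat).
Implicit Types (p q : {mpoly k[n]}) (a w : 'I_n -> k).

Lemma poly_fun0 (P : {poly k}) : (forall s, P.[s] = 0) -> P = 0.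
Proof.
move=> H; apply/eqP/negPn/negP => nz.
have: size (P * 'X + 1%:P) != 1%N.
  by rewrite size_MXaddC (negbTE nz) /= eqSS size_poly_eq0.
case/closed_rootP => x /rootP.
by rewrite hornerD hornerMX hornerC H mul0r add0r; move/eqP; rewrite oner_eq0.
Qed.

Lemma poly_derivs0 (hchar : [pchar k] =i pred0) (P : {poly k}) :
  (forall j, (P^`(j)).[0] = 0) -> P = 0.
Proof.
move=> H; apply/polyP => j; rewrite coef0.
have := H j; rewrite horner_coef0 coef_derivn addn0 ffactnn.
move/eqP; rewrite -mulr_natr mulf_eq0 => /orP[/eqP //|].
by move/pcharf0P: hchar => ->; rewrite -[_ == 0%N]negbK -lt0n fact_gt0.
Qed.

Lemma mpoly_ind2 (P : {mpoly k[n]} -> Prop) :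
  (forall c, P c%:MP) -> (forall i, P 'X_i) ->
  (forall p q, P p -> P q -> P (p + q)) ->
  (forall p q, P p -> P q -> P (p * q)) -> forall p, P p.
Proof.
move=> HC HX HD HM p; rewrite (mpolyE p).
apply: (big_ind P); first by rewrite -mpolyC0.
  exact: (HD).
move=> m _; rewrite -mul_mpolyC; apply: (HM) => //.
rewrite mpolyXE_id; apply: (big_ind P); first by rewrite -mpolyC1.
  exact: (HM).
move=> i _; elim: (m i) => [|e IH]; first by rewrite expr0 -mpolyC1.
by rewrite exprS; apply: (HM).
Qed.

Lemma mderivXU i j : ('X_i : {mpoly k[n]})^`M(j) = (i == j)%:R.
Proof.
rewrite mderivX mnm1E; case: eqP => [->|_].
  have ->: (U_(j) - U_(j) = 0)%MM by apply/mnmP => l; rewrite mnmBE mnm0E subnn.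
  by rewrite mpolyX0 scale1r.
by rewrite scale0r.
Qed.


Definition Dw w p : {mpoly k[n]} := \sum_i w i *: p^`M(i).
Definition DR (R : 'I_n -> {mpoly k[n]}) p : {mpoly k[n]} := \sum_i R i * p^`M(i).
Definition line a w : {mpoly k[n]} -> {poly k} :=
  mmap (@polyC k) (fun i => (a i)%:P + w i *: 'X).

Lemma DwD w p q : Dw w (p + q) = Dw w p + Dw w q.
Proof. by rewrite /Dw -big_split; apply: eq_bigr => i _; rewrite mderivD scalerDr. Qed.
Lemma DwZ w c p : Dw w (c *: p) = c *: Dw w p.
Proof. by rewrite /Dw scaler_sumr; apply: eq_bigr => i _; rewrite mderivZ !scalerA mulrC. Qed.
Lemma DwN w p : Dw w (- p) = - Dw w p.
Proof. by rewrite -scaleN1r DwZ scaleN1r. Qed.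
Lemma DwB w p q : Dw w (p - q) = Dw w p - Dw w q.
Proof. by rewrite DwD DwN. Qed.
Lemma Dw0 w : Dw w 0 = 0.
Proof. by rewrite /Dw big1 // => i _; rewrite mderiv0 scaler0. Qed.
Lemma Dw_sum w (I : Type) (r : seq I) (F : I -> {mpoly k[n]}) :
  Dw w (\sum_(j <- r) F j) = \sum_(j <- r) Dw w (F j).
Proof.
elim: r => [|x r IH]; first by rewrite !big_nil Dw0.
by rewrite !big_cons DwD IH.
Qed.
Lemma DwM w p q : Dw w (p * q) = Dw w p * q + p * Dw w q.
Proof.
rewrite /Dw mulr_suml mulr_sumr -big_split; apply: eq_bigr => i _.
by rewrite mderivM scalerDr -scalerAl -scalerAr.
Qed.
Lemma DwC w c : Dw w c%:MP = 0.
Proof. by rewrite /Dw big1 // => i _; rewrite mderivC scaler0. Qed.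
Lemma DwX w i : Dw w 'X_i = (w i)%:MP.
Proof.
rewrite /Dw (bigD1 i) //= mderivXU eqxx big1 ?addr0.
  by rewrite -alg_mpolyC.
by move=> j /negbTE ji; rewrite mderivXU eq_sym ji scaler0.
Qed.

Lemma iterDw_lin w j p q c :
  iter j (Dw w) (c *: p + q) = c *: iter j (Dw w) p + iter j (Dw w) q.
Proof. by elim: j => [|j IH] //=; rewrite IH DwD DwZ. Qed.

Lemma iterDw_sum w j (I : Type) (r : seq I) (F : I -> {mpoly k[n]}) :
  iter j (Dw w) (\sum_(l <- r) F l) = \sum_(l <- r) iter j (Dw w) (F l).
Proof.
elim: r => [|x r IH]; first by rewrite !big_nil; elim: j => //= j ->; rewrite Dw0.
rewrite !big_cons -IH.
have := iterDw_lin w j (F x) (\sum_(j <- r) F j) 1. rewrite !scale1r. by [].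
Qed.

Lemma DRD R p q : DR R (p + q) = DR R p + DR R q.
Proof. by rewrite /DR -big_split; apply: eq_bigr => i _; rewrite mderivD mulrDr. Qed.
Lemma DRN R p : DR R (- p) = - DR R p.
Proof. by rewrite /DR -sumrN; apply: eq_bigr => i _; rewrite mderivN mulrN. Qed.
Lemma DRB R p q : DR R (p - q) = DR R p - DR R q.
Proof. by rewrite DRD DRN. Qed.
Lemma DR0 R : DR R 0 = 0.
Proof. by rewrite /DR big1 // => i _; rewrite mderiv0 mulr0. Qed.
Lemma DR_sum R (I : Type) (r : seq I) (F : I -> {mpoly k[n]}) :
  DR R (\sum_(j <- r) F j) = \sum_(j <- r) DR R (F j).
Proof.
elim: r => [|x r IH]; first by rewrite !big_nil DR0.
by rewrite !big_cons DRD IH.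
Qed.
Lemma DRM R p q : DR R (p * q) = DR R p * q + p * DR R q.
Proof.
rewrite /DR mulr_suml mulr_sumr -big_split /=. apply: eq_bigr => i _.
rewrite mderivM mulrDr mulrA; congr (_ + _); first exact: mulrA. by rewrite -mulrA mulrCA.
Qed.

Lemma line_eval a w p s : (line a w p).[s] = p.@[fun i => a i + s * w i].
Proof.
elim/mpoly_ind2: p.
- by move=> c; rewrite /line mmapC mevalC hornerC.
- move=> i; rewrite /line mmapX mmap1U mevalXU.
  by rewrite hornerD hornerC hornerZ hornerX mulrC.
- by move=> p q Hp Hq; rewrite /line in Hp Hq *; rewrite rmorphD hornerD Hp Hq mevalD.
- by move=> p q Hp Hq; rewrite /line in Hp Hq *; rewrite rmorphM hornerM Hp Hq mevalM.
Qed.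

Lemma line_at0 a w p : (line a w p).[0] = p.@[a].
Proof. by rewrite line_eval; apply: meval_eq => i; rewrite mul0r addr0. Qed.

Lemma line_deriv a w p : (line a w p)^`() = line a w (Dw w p).
Proof.
elim/mpoly_ind2: p.
- by move=> c; rewrite DwC /line !mmapC derivC.
- move=> i; rewrite DwX /line mmapX mmap1U mmapC.
  by rewrite derivD derivC derivZ derivX add0r alg_polyC.
- by move=> p q Hp Hq; rewrite /line in Hp Hq *; rewrite rmorphD derivD Hp Hq DwD /line rmorphD.
- by move=> p q Hp Hq; rewrite /line in Hp Hq *; rewrite rmorphM derivM Hp Hq DwM /line rmorphD !rmorphM.
Qed.

Lemma line_derivn a w j p : (line a w p)^`(j) = line a w (iter j (Dw w) p).
Proof. elim: j => [|j IH]; first by []. by rewrite derivnS IH line_deriv. Qed.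

Lemma Dw_eval a w p : (Dw w p).@[a] = \sum_i (p^`M(i)).@[a] * w i.
Proof. by rewrite /Dw raddf_sum /=; apply: eq_bigr => i _; rewrite mevalZ mulrC. Qed.

Lemma DR_eval a R p : (DR R p).@[a] = (Dw (fun i => (R i).@[a]) p).@[a].
Proof.
by rewrite /DR Dw_eval raddf_sum /=; apply: eq_bigr => i _; rewrite mevalM mulrC.
Qed.

End Aux.


Section Sub.
Variables (k : closedFieldType) (n : nat).
Implicit Types (p q : {mpoly k[n]}) (x y w : 'cV[k]_n).

Lemma coords_lin x w s :
  coords (x + s *: w) =1 (fun i => coords x i + s * coords w i).
Proof. by move=> i; rewrite /coords !mxE. Qed.

Definition subsp (L : 'cV[k]_n -> Prop) :=
  L 0 /\ forall x w s, L x -> L w -> L (x + s *: w).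

Lemma subspace_tangent L p x w : subsp L -> vanishes_on L p -> L x -> L w ->
  \sum_(i < n) (mderiv i p).@[coords x] * w i 0 = 0.
Proof.
move=> [L0 Ladd] hp Lx Lw.
have P0 : line (coords x) (coords w) p = 0.
  apply: poly_fun0 => s; rewrite line_eval.
  rewrite -(hp (x + s *: w)); last exact: Ladd.
  by apply: meval_eq => i; rewrite coords_lin.
have := congr1 (fun P => (deriv P).[0]) P0.
by rewrite /= line_deriv line_at0 Dw_eval deriv0 horner0.
Qed.

Lemma subspace_matrix L : subsp L ->
  exists B : 'M[k]_n, forall x, L x <-> (x^T <= B)%MS.
Proof.
move=> [L0 Ladd].
have Lsc : forall s x, L x -> L (s *: x).
  by move=> s x Lx; have := Ladd 0 x s L0 Lx; rewrite add0r.
have Lplus : forall x y, L x -> L y -> L (x + y).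
  by move=> x y Lx Ly; have := Ladd x y 1 Lx Ly; rewrite scale1r.
suff H : forall m (A : 'M[k]_n), (n - \rank A <= m)%N ->
    (forall u : 'rV[k]_n, (u <= A)%MS -> L u^T) ->
    exists B : 'M[k]_n, forall x, L x <-> (x^T <= B)%MS.
  apply: (H n 0); first exact: leq_subr.
  by move=> u; rewrite submx0 => /eqP ->; rewrite trmx0.
elim=> [|m IH] A hr hA.
- exists A => x; split; last by move/hA; rewrite trmxK.
  move=> Lx; apply: contraT => nx.
  have : (A < A + x^T)%MS.
    by rewrite ltmxE addsmxSl /= addsmx_sub submx_refl /=.
  move/rank_ltmx; have := rank_leq_col A; have := rank_leq_col (A + x^T)%MS.
  move: hr; rewrite leqn0 subn_eq0; lia.
- case: (classic (forall x, L x -> (x^T <= A)%MS)) => [Hall|].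
    exists A => x; split; first exact: Hall.
    by move/hA; rewrite trmxK.
  move/not_all_ex_not => [x hx].
  have Lx : L x := @not_imply_elim _ _ hx.
  have nx := @not_imply_elim2 _ _ hx.
  have nx' : ~~ (x^T <= A)%MS by apply/negP.
  apply: (IH (A + x^T)%MS).
    have : (A < A + x^T)%MS.
      by rewrite ltmxE addsmxSl /= addsmx_sub submx_refl /=.
    move/rank_ltmx; move: hr; have := rank_leq_col (A + x^T)%MS; lia.
  move=> u /sub_addsmxP [[u1 u2] /= ->].
  rewrite linearD /=; apply: Lplus.
    by apply: hA; apply: submxMl.
  have : (u2 *m x^T <= x^T)%MS by apply: submxMl.
  by case/sub_rVP => c ->; rewrite linearZ /= trmxK; apply: Lsc.
Qed.


Lemma subspace_zclosed L : subsp L -> zclosed L.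
Proof.
move=> hL; have [B HB] := subspace_matrix hL.
pose K := cokermx B.
exists (fun p => exists j : 'I_n, p = \sum_i K i j *: 'X_i) => x.
have ev : forall j, (\sum_i K i j *: 'X_i : {mpoly k[n]}).@[coords x] =
    (x^T *m K) 0 j.
  move=> j; rewrite raddf_sum /= mxE; apply: eq_bigr => i _.
  by rewrite mevalZ mevalXU /coords !mxE mulrC.
rewrite HB submxE; split.
  by move/eqP => H0 p [j ->]; rewrite ev H0 mxE.
by move=> H; apply/eqP/matrixP => i j; rewrite (ord1 i) [RHS]mxE -(H _ (ex_intro _ j erefl)) ev mxE.
Qed.

End Sub.


Section Eq.
Variables (k : closedFieldType) (n : nat).
Implicit Types (p q : {mpoly k[n]}) (x y w : 'cV[k]_n).

Definition mapof (R : 'I_n -> {mpoly k[n]}) x : 'cV[k]_n := \col_i (R i).@[coords x].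

Definition EqR G R := equivariant G (mapof R).

Lemma Dw_eq (w1 w2 : 'I_n -> k) p : w1 =1 w2 -> Dw w1 p = Dw w2 p.
Proof. by move=> e; apply: eq_bigr => i _; rewrite e. Qed.

Lemma EqR_DQ G R Q : EqR G R -> EqR G Q -> EqR G (fun m => DR R (Q m)).
Proof.
move=> hR hQ g x Gg; apply/matrixP => m j; rewrite (ord1 j) !mxE.
set w := mapof R x.
have cw : (fun i => (R i).@[coords (g *m x)]) =1 coords (g *m w).
  by move=> i; rewrite /w -hR // /coords mxE.
have cw' : (fun i => (R i).@[coords x]) =1 coords w.
  by move=> i; rewrite /coords mxE.
rewrite DR_eval (Dw_eq _ cw) -(line_at0 _ (coords (g *m w))) -line_deriv.
have key : line (coords (g *m x)) (coords (g *m w)) (Q m) =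
    \sum_b g m b *: line (coords x) (coords w) (Q b).
  apply/eqP; rewrite -subr_eq0; apply/eqP; apply: poly_fun0 => s.
  rewrite hornerD hornerN line_eval horner_sum; apply/eqP; rewrite subr_eq0; apply/eqP.
  transitivity ((Q m).@[coords (g *m (x + s *: w))]).
    by apply: meval_eq => i; rewrite mulmxDr -scalemxAr coords_lin.
  have := congr1 (fun M : 'cV[k]_n => M m 0) (hQ g (x + s *: w) Gg).
  rewrite /= !mxE => ->; apply: eq_bigr => b _.
  rewrite mxE hornerZ line_eval; congr (_ * _).
  by apply: meval_eq => i; rewrite coords_lin.
rewrite key raddf_sum /= horner_sum; apply: eq_bigr => b _.
rewrite mxE derivZ hornerZ line_deriv line_at0 DR_eval; congr (_ * _).
by congr (_.@[_]); apply: Dw_eq.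
Qed.


Definition Q0 : 'I_n -> {mpoly k[n]} := fun _ => 0.

Fixpoint T p (Qs : seq ('I_n -> {mpoly k[n]})) : {mpoly k[n]} :=
  match Qs with
  | [::] => p
  | Q :: Qs' => \sum_i Q i * T (p^`M(i)) Qs'
  end.

Lemma DR_T R Qs p : DR R (T p Qs) = T p (rcons Qs R) +
  \sum_(l < size Qs) T p (set_nth Q0 Qs l (fun m => DR R (nth Q0 Qs l m))).
Proof.
elim: Qs p => [|Q Qs IH] p /=.
  by rewrite big_ord0 addr0.
rewrite DR_sum big_ord_recl /=.
under eq_bigr => i _ do rewrite DRM IH mulrDr.
rewrite !big_split /= addrA [X in _ = X]addrC -!addrA; congr (_ + _).
rewrite [RHS]addrC; congr (_ + _).
rewrite exchange_big /=; apply: eq_bigr => l _.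
by rewrite mulr_sumr.
Qed.


Definition AllEq G (Qs : seq ('I_n -> {mpoly k[n]})) :=
  forall l, (l < size Qs)%N -> EqR G (nth Q0 Qs l).

Lemma vanish_add (Y : 'cV[k]_n -> Prop) p q :
  vanishes_on Y p -> vanishes_on Y q -> vanishes_on Y (p + q).
Proof. by move=> hp hq x Yx; rewrite mevalD hp // hq // addr0. Qed.
Lemma vanish_opp (Y : 'cV[k]_n -> Prop) p :
  vanishes_on Y p -> vanishes_on Y (- p).
Proof. by move=> hp x Yx; rewrite mevalN hp // oppr0. Qed.
Lemma vanish_sum (Y : 'cV[k]_n -> Prop) (I : Type) (r : seq I) (F : I -> {mpoly k[n]}) :
  (forall i, vanishes_on Y (F i)) -> vanishes_on Y (\sum_(i <- r) F i).
Proof.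
move=> hF; elim: r => [|a r IH]; first by rewrite big_nil => x _; rewrite meval0.
by rewrite big_cons; apply: vanish_add.
Qed.

Lemma T_in G (Y : 'cV[k]_n -> Prop) :
  (forall R p, EqR G R -> vanishes_on Y p -> vanishes_on Y (DR R p)) ->
  forall j Qs, size Qs = j -> AllEq G Qs ->
  forall p, vanishes_on Y p -> vanishes_on Y (T p Qs).
Proof.
move=> SR; elim=> [|j IH] Qs.
  by move/size0nil => -> _ p.
case/lastP: Qs => [//|Qs R]; rewrite size_rcons => -[sQ] hall p hp.
have hallQ : AllEq G Qs.
  by move=> l hl; have := hall l; rewrite size_rcons nth_rcons hl; apply; lia.
have hR : EqR G R.
  by have := hall (size Qs); rewrite size_rcons nth_rcons ltnn eqxx; apply.
have -> : T p (rcons Qs R) = DR R (T p Qs) -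
    \sum_(l < size Qs) T p (set_nth Q0 Qs l (fun m => DR R (nth Q0 Qs l m))).
  by rewrite DR_T addrK.
apply: vanish_add; first by apply: SR => //; apply: IH.
apply: vanish_opp; apply: vanish_sum => l; apply: IH => //.
  by rewrite size_set_nth -sQ; apply/maxn_idPr; exact: ltn_ord.
move=> l'; rewrite size_set_nth nth_set_nth /=.
have -> : maxn l.+1 (size Qs) = size Qs by apply/maxn_idPr; exact: ltn_ord.
move=> hl'; case: eqP => [_|_]; last exact: hallQ.
by apply: EqR_DQ => //; apply: hallQ.
Qed.

Lemma iterDwZ (w : 'I_n -> k) j (c : k) p : iter j (Dw w) (c *: p) = c *: iter j (Dw w) p.
Proof. by elim: j => [|j IH] //=; rewrite IH DwZ. Qed.

Lemma T_nseq_eval Q (a : 'I_n -> k) j p :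
  (T p (nseq j Q)).@[a] = (iter j (Dw (fun i => (Q i).@[a])) p).@[a].
Proof.
elim: j p => [|j IH] p //=.
rewrite -/(iter j.+1 _ _) iterSr {1}/Dw iterDw_sum !raddf_sum /=.
apply: eq_bigr => i _; rewrite mevalM IH iterDwZ mevalZ.
by [].
Qed.

End Eq.


Section Fin.
Variables (k : closedFieldType) (n : nat).
Implicit Types (p q : {mpoly k[n]}) (x y w : 'cV[k]_n).

Lemma polymap_mapof (R : 'I_n -> {mpoly k[n]}) : polymap (mapof R).
Proof. by exists R => x i; rewrite mxE. Qed.

Lemma polymap_eq (f : 'cV[k]_n -> 'cV[k]_n) : polymap f ->
  exists R, forall x, f x = mapof R x.
Proof.
case=> R hR; exists R => x; apply/matrixP => i j.
by rewrite (ord1 j) hR mxE.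
Qed.

Lemma iterDw_eq (w1 w2 : 'I_n -> k) j p : w1 =1 w2 ->
  iter j (Dw w1) p = iter j (Dw w2) p.
Proof. by move=> e; elim: j => [|j IH] //=; rewrite IH (Dw_eq _ e). Qed.

Lemma Stab (hchar : [pchar k] =i pred0) G Y Q :
  G_symmetric G Y -> EqR G Q -> forall x, Y x -> Y (x + mapof Q x).
Proof.
move=> [[S0 HS] Htan] hQ x Yx.
have SR : forall R p, EqR G R -> vanishes_on Y p -> vanishes_on Y (DR R p).
  move=> R p hR hp y Yy.
  have := Htan (mapof R) (conj (polymap_mapof R) hR) y Yy p hp.
  move=> H; rewrite DR_eval Dw_eval -[RHS]H; apply: eq_bigr => i _; by rewrite mxE.
apply/HS => p hp0.
have hp : vanishes_on Y p by move=> y /HS; apply.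
set w := mapof Q x.
have P0 : line (coords x) (coords w) p = 0.
  apply: (poly_derivs0 hchar) => j.
  rewrite line_derivn line_at0.
  rewrite (iterDw_eq _ (w2 := fun i => (Q i).@[coords x])); last by move=> i; rewrite /coords mxE.
  rewrite -T_nseq_eval; apply: (T_in SR (erefl _)) => //.
  by move=> l; rewrite size_nseq nth_nseq => ->.
have := congr1 (fun P => P.[1]) P0; rewrite /= horner0 line_eval => <-.
by apply: meval_eq => i; rewrite mul1r /coords !mxE.
Qed.

End Fin.

Unset Implicit Arguments.
Set Strict Implicit.

Theorem proposition4p3p2 (k : closedFieldType) (n : nat)
    (hchar : [pchar k] =i pred0)
    (G : 'M[k]_n -> Prop) (hG : closed_subgroup G) :
  (forall H : 'M[k]_n -> Prop, closed_subgroup H -> (forall h, H h -> G h) ->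
     G_symmetric G (fixed H)) /\
  (forall v : 'cV[k]_n,
     is_M G v (EndG_at G v) /\
     (forall w, EndG_at G v w -> fixed (stab G v) w)).
Proof.
split.
  move=> H _ HG.
  have hsub : subsp (fixed H).
    split; first by move=> h _; rewrite mulmx0.
    by move=> x w s fx fw h Hh; rewrite mulmxDr -scalemxAr fx // fw.
  split; first exact: subspace_zclosed.
  move=> xi [_ hxi] x fx p hp; apply: (subspace_tangent hsub hp fx).
  by move=> h Hh; rewrite -hxi ?fx //; apply: HG.
move=> v; split; last first.
  by move=> _ [phi [[_ ephi] ->]] g [Gg gv]; rewrite -ephi // gv.
have hsub : subsp (EndG_at G v).
  split.
    exists (fun _ => 0); split=> //; split.
      by exists (fun _ => 0) => x i; rewrite mxE meval0.
    by move=> g x _; rewrite mulmx0.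
  move=> x w s [phi1 [[p1 e1] ->]] [phi2 [[p2 e2] ->]].
  exists (fun y => phi1 y + s *: phi2 y); split=> //; split.
    case: p1 => R1 h1; case: p2 => R2 h2.
    exists (fun i => R1 i + s *: R2 i) => y i.
    by rewrite !mxE h1 h2 mevalD mevalZ.
  by move=> g y Gg; rewrite e1 // e2 // mulmxDr -scalemxAr.
split.
- split; first exact: subspace_zclosed.
  move=> xi [pxi exi] x [phi [[pphi ephi] ->]] p hp.
  apply: (subspace_tangent hsub hp); first by exists phi.
  exists (fun y => xi (phi y)); split=> //; split.
    have [Rx hRx] := polymap_eq pxi; have [Rp hRp] := polymap_eq pphi.
    exists (fun i => Rx i \mPo [tuple Rp j | j < n]) => y i.
    rewrite comp_mpoly_meval hRx hRp !mxE; apply: meval_eq => j.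
    by rewrite tnth_mktuple /coords mxE.
  by move=> g y Gg; rewrite ephi // exi.
- exists id; split=> //; split=> //.
  by exists (fun i => 'X_i) => x i; rewrite mevalXU.
- move=> Y hY Yv x [phi [[pphi ephi] ->]].
  have [Rp hRp] := polymap_eq pphi.
  pose Q := fun i => Rp i - 'X_i.
  have hQ : forall y, mapof Q y = phi y - y.
    move=> y; apply/matrixP => i j; rewrite (ord1 j) !mxE hRp mxE mevalB mevalXU.
    by rewrite /coords.
  have eQ : EqR G Q.
    by move=> g y Gg; rewrite !hQ ephi // mulmxBr.
  have := Stab hchar hY eQ Yv; rewrite hQ.
  by rewrite addrC subrK.
Qed.
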